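(* Let $c_2,c_3,a_0,a_1,a_2,b_0,b_1$ be constants, $\mu(t)=t^2+c_2t+c_3$, $\phi=a_0\mu(t)^2+a_1\mu(t)+a_2$, $\psi=b_0\mu(t)+b_1$, and $\lambda_n=n(a_0(n-1)+b_0)$. Assume that for each $n\ge0$ the equation $\phi\,\mathbb{D}^2P+\psi\,\mathbb{S}\mathbb{D}P=\lambda_nP$ has a unique monic polynomial solution $P=P_n$ of degree $n$ in $\mu(t)$, and write $P_n=\vartheta_n+p_{1,n}\vartheta_{n-1}+p_{2,n}\vartheta_{n-2}+\cdots$. Then $\{P_n\}$ satisfies $P_{n+1}=(\mu(t)-\beta_n)P_n-\gamma_nP_{n-1}$ with $$\beta_n=p_{1,n}-p_{1,n+1}+f_n,\qquad \gamma_n=p_{1,n}(f_{n-1}-\beta_n)+p_{2,n}-p_{2,n+1},$$ where $$p_{1,n}=-\frac{n\big(a_0(n-1)(f_{n-2}+f_{n-1})+a_1(n-1)+b_0(f_{n-1}+g_{n-1})+b_1\big)}{\lambda_{n-1}-\lambda_n},$$ $$p_{2,n}=-\frac{1}{\lambda_{n-2}-\lambda_n}\Big\{(n-1)\Big(p_{1,n}\big(a_0(n-2)(f_{n-3}+f_{n-2})+a_1(n-2)+b_0(f_{n-2}+g_{n-2})+b_1\big)+n\big(f_{n-2}(a_0f_{n-2}+a_1)+a_2\big)\Big)+n\,g_{n-1}\big(b_0f_{n-2}+b_1\big)\Big\}.$$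
   Context: Operators: $\mathbb{D}f(t)=\frac{f(t+1/2)-f(t-1/2)}{\mu(t+1/2)-\mu(t-1/2)}$, $\mathbb{S}f(t)=\frac{f(t+1/2)+f(t-1/2)}{2}$, acting on polynomials in $\mu(t)$. Basis: $\vartheta_n(t)=(-4)^{-n}(2t+1/2+c_2)_n(-2t+1/2-c_2)_n$ (Pochhammer symbols), $\vartheta_k=0$ for $k<0$; $\vartheta_n$ is monic of degree $n$ in $\mu(t)$, with $\mu(t)\vartheta_n=\vartheta_{n+1}+f_n\vartheta_n$, $\mathbb{S}\vartheta_n=\vartheta_n+g_n\vartheta_{n-1}$, $\mathbb{D}\vartheta_n=n\vartheta_{n-1}$, where $f_n=-\frac{c_2^2}{4}+\frac{(2n+1)^2}{16}+c_3$ and $g_n=\frac{n(2n-1)}{4}$. *)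

(* Defs.v *)
From mathcomp Require Import all_boot all_order all_algebra.
Set Implicit Arguments. Unset Strict Implicit. Unset Printing Implicit Defensive.
Import Order.TTheory GRing.Theory Num.Theory.
Local Open Scope ring_scope.

Section Defs.
Variable R : numFieldType.
Variables c2 c3 : R.

Definition mu : {poly R} := 'X^2 + c2 *: 'X + c3%:P.

Definition shift (h : R) (q : {poly R}) : {poly R} := q \Po ('X + h%:P).

(* D f(t) = (f(t+1/2) - f(t-1/2)) / (mu(t+1/2) - mu(t-1/2))
   (exact polynomial division on polynomials in mu(t)) *)
Definition Dop (q : {poly R}) : {poly R} :=
  (shift (2^-1) q - shift (- 2^-1) q) %/ (shift (2^-1) mu - shift (- 2^-1) mu).

Definition Sop (q : {poly R}) : {poly R} :=
  2^-1 *: (shift (2^-1) q + shift (- 2^-1) q).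

(* theta_n(t) = (-4)^{-n} (2t+1/2+c2)_n (-2t+1/2-c2)_n  (Pochhammer symbols) *)
Definition theta (n : nat) : {poly R} :=
  ((-4) ^- n) *: \prod_(i < n)
     ((2%:R *: 'X + (2^-1 + c2 + i%:R)%:P) * (- (2%:R *: 'X) + (2^-1 - c2 + i%:R)%:P)).

Definition fc (k : int) : R :=
  - (c2 ^+ 2) / 4%:R + (2%:R * k%:~R + 1) ^+ 2 / 16%:R + c3.
Definition gc (k : int) : R := k%:~R * (2%:R * k%:~R - 1) / 4%:R.

Definition theta_expansion (P : nat -> {poly R}) (p : nat -> nat -> R) : Prop :=
  (forall n, P n \Po mu = \sum_(j < n.+1) p j n *: theta (n - j)) /\
  (forall n j, (n < j)%N -> p j n = 0).

Variables a0 a1 a2 b0 b1 : R.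

Definition phi : {poly R} := a0 *: mu ^+ 2 + a1 *: mu + a2%:P.
Definition psi : {poly R} := b0 *: mu + b1%:P.
Definition lam (k : int) : R := k%:~R * (a0 * (k%:~R - 1) + b0).

Definition ode (l : R) (F : {poly R}) : Prop :=
  phi * Dop (Dop F) + psi * Sop (Dop F) = l *: F.

Definition p1_formula (n : nat) : R :=
  - (n%:R * (a0 * (n%:R - 1) * (fc (n%:Z - 2) + fc (n%:Z - 1)) + a1 * (n%:R - 1)
             + b0 * (fc (n%:Z - 1) + gc (n%:Z - 1)) + b1))
  / (lam (n%:Z - 1) - lam n%:Z).

Definition p2_formula (p1n : R) (n : nat) : R :=
  - (lam (n%:Z - 2) - lam n%:Z)^-1 *
    ((n%:R - 1) * (p1n * (a0 * (n%:R - 2) * (fc (n%:Z - 3) + fc (n%:Z - 2))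
                          + a1 * (n%:R - 2) + b0 * (fc (n%:Z - 2) + gc (n%:Z - 2)) + b1)
                   + n%:R * (fc (n%:Z - 2) * (a0 * fc (n%:Z - 2) + a1) + a2))
     + n%:R * gc (n%:Z - 1) * (b0 * fc (n%:Z - 2) + b1)).

End Defs.

(* Main.v *)
Require Import Defs.
From mathcomp Require Import all_boot all_order all_algebra.
From mathcomp Require Import ring lra zify.
From Stdlib Require Import FunctionalExtensionality.
Import Order.TTheory GRing.Theory Num.Theory.
Local Open Scope ring_scope.

Section Work.
Variable R : numFieldType.
Variables c2 c3 a0 a1 a2 b0 b1 : R.

Lemma poly_ext (p q : {poly R}) : (forall x, p.[x] = q.[x]) -> p = q.
Proof.
move=> H; apply/eqP; rewrite -subr_eq0; apply/negPn/negP => nz.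
set d := p - q.
pose rs := [seq (i%:R : R) | i <- iota 0 (size d)].
have H1 : all (root d) rs.
  apply/allP => y /mapP [i _ ->]; by rewrite /root /d !hornerE H subrr.
have H2 : uniq rs.
  rewrite map_inj_uniq ?iota_uniq // => i j /eqP; rewrite eqr_nat => /eqP //.
have := max_poly_roots nz H1 H2; by rewrite size_map size_iota ltnn.
Qed.

Lemma intrn (n : nat) : (n%:Z)%:~R = n%:R :> R. Proof. by []. Qed.
Lemma natS (n : nat) : (n.+1)%:R = n%:R + 1 :> R. Proof. exact: mulrSr. Qed.

Definition hE := (hornerD, hornerN, hornerX, hornerC, horner_exp, hornerZ, hornerM, hornerCM, horner_comp).

Ltac fld := field; repeat (apply/andP; split); rewrite ?pnatr_eq0 ?oppr_eq0 ?pnatr_eq0 //.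

Fact th_key : unit. Proof. by []. Qed.
Definition th k := locked_with th_key (theta c2 k).
Lemma thE k : th k = theta c2 k. Proof. exact: locked_withE. Qed.
Definition mu' := mu c2 c3.
Definition fN (k : nat) := fc c2 c3 k%:Z.

Lemma th0 : th 0 = 1.
Proof. by rewrite thE /theta big_ord0 expr0 invr1 scale1r. Qed.

Lemma thS k : th k.+1 = th k * (mu' - (fN k)%:P).
Proof.
apply: poly_ext => x.
rewrite !thE /theta /mu' /mu /fN /fc !hE !horner_prod big_ord_recr /= !hE.
rewrite intrn exprSr invfM.
set P := \prod_(_ < _) _. fld.
by rewrite expf_neq0 // oppr_eq0 pnatr_eq0.
Qed.

Definition gN (k : nat) := gc R k%:Z.
Definition h : R := 2^-1.
Definition Delta := shift h mu' - shift (- h) mu'.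

Lemma th_shift k x :
  (th k.+1).[x + h] = (th k.+1).[x] + gN k.+1 * (th k).[x] + (2 * x + c2) * k.+1%:R * (th k).[x] / 2 /\
  (th k.+1).[x - h] = (th k.+1).[x] + gN k.+1 * (th k).[x] - (2 * x + c2) * k.+1%:R * (th k).[x] / 2.
Proof.
elim: k x => [|k IH] x.
  rewrite !thS th0 /mu' /mu /fN /gN /fc /gc /h !hE !intrn; split; fld.
have [E1 E2] := IH x.
rewrite ![th k.+2]thS !hornerM E1 E2 [th k.+1]thS /mu' /mu /fN /gN /fc /gc /h !hE !intrn.
rewrite !natS; move: (th k).[x] => t; split; fld.
Qed.

Lemma Delta_eq : Delta = 2 *: 'X + c2%:P.
Proof.
apply: poly_ext => x; rewrite /Delta /shift /mu' /mu /h !hE; fld.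
Qed.

Lemma Delta_neq0 : Delta != 0.
Proof.
apply/eqP => E; have := congr1 (fun p => p.[1 - c2 / 2]) E.
rewrite Delta_eq !hE => /eqP; apply/negP.
have -> : 2 * (1 - c2 / 2) + c2 = 2 by fld.
by rewrite pnatr_eq0.
Qed.

Lemma Dnum k : shift h (th k.+1) - shift (- h) (th k.+1) = Delta * (k.+1%:R *: th k).
Proof.
apply: poly_ext => x; rewrite /shift Delta_eq !hE.
have [E1 E2] := th_shift k x; rewrite -/(x - h) E1 E2 /h; move: (th k).[x] (th k.+1).[x] => t t'; fld.
Qed.

Lemma Dop_th k : Dop c2 c3 (th k.+1) = k.+1%:R *: th k.
Proof. by rewrite /Dop -/mu' -/h -/Delta Dnum mulrC mulpK // Delta_neq0. Qed.

Lemma Dop_th0 : Dop c2 c3 (th 0) = 0.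
Proof. by rewrite /Dop th0 /shift !comp_polyC subrr div0p. Qed.

Lemma Sop_th k : Sop (th k.+1) = th k.+1 + gN k.+1 *: th k.
Proof.
apply: poly_ext => x; rewrite /Sop /shift -/h !hE.
have [E1 E2] := th_shift k x; rewrite -/(x - h) E1 E2; rewrite /h; move: (th k).[x] (th k.+1).[x] => t t'; fld.
Qed.

Lemma Sop_th0 : Sop (th 0) = th 0.
Proof. rewrite th0 -polyC1; apply: poly_ext => x; rewrite /Sop /shift !hE; fld. Qed.

Lemma DopD p q : Dop c2 c3 (p + q) = Dop c2 c3 p + Dop c2 c3 q.
Proof. by rewrite /Dop /shift !comp_polyD opprD addrACA divpD. Qed.
Lemma DopZ a p : Dop c2 c3 (a *: p) = a *: Dop c2 c3 p.
Proof. by rewrite /Dop /shift !comp_polyZ -scalerBr divpZl. Qed.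
Lemma SopD (p q : {poly R}) : Sop (p + q) = Sop p + Sop q.
Proof. by rewrite /Sop /shift !comp_polyD addrACA scalerDr. Qed.
Lemma SopZ a (p : {poly R}) : Sop (a *: p) = a *: Sop p.
Proof. by rewrite /Sop /shift !comp_polyZ -scalerDr !scalerA mulrC. Qed.


Lemma intrnB (k n : nat) : ((k%:Z - n%:Z)%:~R : R) = k%:R - n%:R.
Proof. by rewrite intrB. Qed.

Definition Lop (F : {poly R}) : {poly R} :=
  phi c2 c3 a0 a1 a2 * Dop c2 c3 (Dop c2 c3 F) + psi c2 c3 b0 b1 * Sop (Dop c2 c3 F).

Lemma odeE l F : ode c2 c3 a0 a1 a2 b0 b1 l F <-> Lop F = l *: F.
Proof. by []. Qed.

Lemma Dop0 : Dop c2 c3 0 = 0.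
Proof. by rewrite /Dop /shift !comp_poly0 subrr div0p. Qed.
Lemma Sop0 : Sop (0 : {poly R}) = 0.
Proof. by rewrite /Sop /shift !comp_poly0 addr0 scaler0. Qed.

Lemma LopD p q : Lop (p + q) = Lop p + Lop q.
Proof. by rewrite /Lop !DopD SopD !mulrDr addrACA. Qed.
Lemma LopZ a p : Lop (a *: p) = a *: Lop p.
Proof. by rewrite /Lop !DopZ SopZ -!scalerAr scalerDr. Qed.
Lemma Lop0 : Lop 0 = 0.
Proof. by rewrite /Lop Dop0 Sop0 Dop0 !mulr0 addr0. Qed.

Lemma Lop_sum N (F : nat -> {poly R}) :
  Lop (\sum_(i < N) F i) = \sum_(i < N) Lop (F i).
Proof.
elim: N => [|N IH]; first by rewrite !big_ord0 Lop0.
by rewrite !big_ord_recr /= LopD IH.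
Qed.

Definition lN (k : nat) := lam a0 b0 k%:Z.
Definition AN (k : nat) : R :=
  k%:R * (a0 * (k%:R - 1) * (fc c2 c3 (k%:Z - 2) + fc c2 c3 (k%:Z - 1)) + a1 * (k%:R - 1)
             + b0 * (fc c2 c3 (k%:Z - 1) + gc R (k%:Z - 1)) + b1).
Definition BN (k : nat) : R :=
  k%:R * (k%:R - 1) * (fc c2 c3 (k%:Z - 2) * (a0 * fc c2 c3 (k%:Z - 2) + a1) + a2)
  + k%:R * gc R (k%:Z - 1) * (b0 * fc c2 c3 (k%:Z - 2) + b1).

Lemma Lop_th k : Lop (th k) = lN k *: th k + AN k *: th k.-1 + BN k *: th k.-2.
Proof.
case: k => [|[|m]] /=;
  rewrite /Lop ?(Dop_th, Dop_th0, DopZ, Dop0, scaler0, SopZ, Sop_th, Sop_th0, Sop0).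
- apply: poly_ext => x; rewrite th0 /lN /AN /BN /lam /fc /gc !hE !intrnB !intrn; fld.
- apply: poly_ext => x; rewrite thS th0 /psi /mu' /mu /fN /lN /AN /BN /lam /fc /gc !hE !intrnB !intrn.
  fld.
- apply: poly_ext => x; rewrite [th m.+2]thS [th m.+1]thS /phi /psi /mu' /mu /fN /gN /lN /AN /BN /lam /fc /gc !hE !intrnB !intrn.
  rewrite !natS; move: (th m).[x] => t; fld.
Qed.

Fixpoint Th k : {poly R} := if k is k'.+1 then Th k' * ('X - (fN k')%:P) else 1.

Lemma Th_monic k : Th k \is monic.
Proof. elim: k => [|k IH] /=; first exact: monic1. by rewrite monicMl // monicXsubC. Qed.

Lemma size_Th k : size (Th k) = k.+1.
Proof.
elim: k => [|k IH] /=; first by rewrite size_poly1.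
by rewrite size_Mmonic ?monicXsubC ?monic_neq0 ?Th_monic // IH size_XsubC addn2.
Qed.

Lemma Th_lead k : (Th k)`_k = 1.
Proof. by have /monicP := Th_monic k; rewrite lead_coefE size_Th. Qed.

Lemma Th_hi k j : (k < j)%N -> (Th k)`_j = 0.
Proof. by move=> H; move: j H; apply/leq_sizeP; rewrite size_Th. Qed.

Lemma mu_size : (1 < size mu')%N.
Proof.
rewrite ltnNge; apply/negP => /leq_sizeP => /(_ 2 (leqnn 2)).
rewrite /mu' /mu !coefE /= mulr0 !addr0; apply/eqP; exact: oner_neq0.
Qed.

Lemma th_Th k : th k = Th k \Po mu'.
Proof.
elim: k => [|k IH] /=; first by rewrite th0 -polyC1 comp_polyC.
by rewrite thS IH comp_polyM comp_polyB comp_polyX comp_polyC.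
Qed.

Lemma mu_th k : mu' * th k = th k.+1 + fN k *: th k.
Proof. by rewrite thS mulrBr [th k * (fN k)%:P]mulrC mul_polyC subrK mulrC. Qed.

Lemma indep d (c : nat -> R) : \sum_(i < d) c i *: Th i = 0 -> forall i, (i < d)%N -> c i = 0.
Proof.
elim: d c => [|d IH] c H i Hi //.
move: H; rewrite big_ord_recr /= => H.
have Hd : c d = 0.
  have := congr1 (fun p : {poly R} => p`_d) H; rewrite coefD coefZ Th_lead coef_sum big1 ?add0r ?coef0 ?mulr1 //.
  by move=> j _; rewrite coefZ (Th_hi _ _ (ltn_ord j)) mulr0.
rewrite Hd scale0r addr0 in H.
move: Hi; rewrite ltnS leq_eqVlt => /orP [/eqP -> //|]; exact: IH.
Qed.

Fixpoint coords d (q : {poly R}) : nat -> R :=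
  if d is d'.+1 then fun i => if i == d' then q`_d' else coords d' (q - q`_d' *: Th d') i
  else fun _ => 0.

Lemma coordsP d (q : {poly R}) : (size q <= d)%N ->
  q = \sum_(i < d) coords d q i *: Th i /\ (forall i, (d <= i)%N -> coords d q i = 0).
Proof.
elim: d q => [|d IH] q Hq.
  move: Hq; rewrite leqn0 size_poly_eq0 => /eqP ->; by rewrite big_ord0.
set q' := q - q`_d *: Th d.
have Hq' : (size q' <= d)%N.
  apply/leq_sizeP => j; rewrite leq_eqVlt => /orP [/eqP <-|Hj].
    by rewrite coefB coefZ Th_lead mulr1 subrr.
  rewrite coefB coefZ (Th_hi _ _ Hj) mulr0 subr0.
  by move/leq_sizeP: Hq; apply.
have [E S] := IH q' Hq'; split.
  rewrite big_ord_recr /= eqxx.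
  rewrite (eq_bigr (fun i : 'I_d => coords d q' i *: Th i)); first by rewrite -E /q' subrK.
  by move=> i _; rewrite (ltn_eqF (ltn_ord i)).
by move=> i Hi /=; rewrite (gtn_eqF Hi) S // ltnW.
Qed.

Definition comb N (c : nat -> R) := \sum_(i < N) c i *: th i.

Lemma comb_Th N c : comb N c = (\sum_(i < N) c i *: Th i) \Po mu'.
Proof.
elim: N => [|N IH]; first by rewrite /comb !big_ord0 comp_poly0.
by rewrite /comb !big_ord_recr /= -/(comb N c) IH comp_polyD comp_polyZ th_Th.
Qed.

Lemma comb_inj N c e : comb N c = comb N e -> forall i, (i < N)%N -> c i = e i.
Proof.
move=> H i Hi; apply/eqP; rewrite -subr_eq0; apply/eqP; move: i Hi; apply: indep.
move: H; rewrite !comb_Th => /eqP; rewrite -subr_eq0 -comp_polyB comp_poly_eq0 ?mu_size //.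
rewrite -sumrB => /eqP H'; rewrite -[RHS]H'; apply: eq_bigr => i _; by rewrite scalerBl.
Qed.

Lemma sum_shift (H : nat -> {poly R}) N : H 0%N = 0 -> H N = 0 ->
  \sum_(i < N) H i = \sum_(i < N) H i.+1.
Proof.
case: N => [|N] H0 HN; first by rewrite !big_ord0.
by rewrite big_ord_recl big_ord_recr /= H0 HN add0r addr0.
Qed.

Definition Mm (c : nat -> R) i := (if i is j.+1 then c j else 0) + fN i * c i.
Definition Tm (c : nat -> R) i := lN i * c i + AN i.+1 * c i.+1 + BN i.+2 * c i.+2.

Lemma comb_mu N c : c N = 0 -> mu' * comb N c = comb N.+1 (Mm c).
Proof.
move=> HN; rewrite /comb mulr_sumr.
rewrite (eq_bigr (fun i : 'I_N => c i *: th i.+1 + (fN i * c i) *: th i)); last first.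
  by move=> i _; rewrite -scalerAr mu_th scalerDr scalerA mulrC.
rewrite big_split /= /Mm.
rewrite (eq_bigr (fun i : 'I_N.+1 => (if val i is j.+1 then c j else 0) *: th i + (fN i * c i) *: th i)); last first.
  by move=> i _; rewrite scalerDl.
rewrite big_split /= big_ord_recl /= scale0r add0r big_ord_recr /= HN mulr0 scale0r addr0.
done.
Qed.

Lemma AN0 : AN 0 = 0. Proof. by rewrite /AN mul0r. Qed.
Lemma BN0 : BN 0 = 0. Proof. by rewrite /BN !mul0r add0r. Qed.
Lemma BN1 : BN 1 = 0. Proof. rewrite /BN /gc !intrnB ?intrn; fld. Qed.

Lemma comb_L N c : c N = 0 -> c N.+1 = 0 -> Lop (comb N c) = comb N (Tm c).
Proof.
move=> HN HN1; rewrite /comb /Tm.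
have -> : Lop (\sum_(i < N) c i *: th i) = \sum_(i < N) c i *: Lop (th i).
  by rewrite (Lop_sum N (fun i => c i *: th i)); apply: eq_bigr => i _; rewrite LopZ.
rewrite (eq_bigr (fun i : 'I_N => (c i * lN i) *: th i + (c i * AN i) *: th i.-1 + (c i * BN i) *: th i.-2)); last first.
  by move=> i _; rewrite Lop_th !scalerDr !scalerA.
rewrite [RHS](eq_bigr (fun i : 'I_N => (c i * lN i) *: th i + (AN i.+1 * c i.+1) *: th i + (BN i.+2 * c i.+2) *: th i)); last first.
  by move=> i _; rewrite !scalerDl mulrC.
rewrite !big_split /=.
rewrite (sum_shift (fun i => (c i * AN i) *: th i.-1)) /=; last by rewrite HN mul0r scale0r.
  2: by rewrite AN0 mulr0 scale0r.
rewrite (sum_shift (fun i => (c i * BN i) *: th i.-2)) /=; last by rewrite HN mul0r scale0r.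
  2: by rewrite BN0 mulr0 scale0r.
rewrite (sum_shift (fun i => (c i.+1 * BN i.+1) *: th i.-1)) /=; last by rewrite HN1 mul0r scale0r.
  2: by rewrite BN1 mulr0 scale0r.
congr (_ + _ + _); apply: eq_bigr => i _; by rewrite mulrC.
Qed.

Lemma Wid (c : nat -> R) i :
  Tm (Tm (Mm c)) i - 2 * Tm (Mm (Tm c)) i + Mm (Tm (Tm c)) i
  - 2 * a0 * (Tm (Mm c) i + Mm (Tm c) i) - (b0 ^+ 2 - 2 * a0 * b0) * Mm c i
  = 2 * Tm (Tm c) i + (2 * a1 - b0) * Tm c i + b1 * (b0 - 2 * a0) * c i.
Proof.
case: i => [|i]; rewrite /Tm /Mm /= /fN /lN /AN /BN /lam /fc /gc !intrnB !intrn !natS.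
  move: (c 0%N) (c 1%N) (c 2%N) (c 3%N) (c 4%N) (c 5%N) => x0 x1 x2 x3 x4 x5; fld.
move: (c i) (c i.+1) (c i.+2) (c i.+3) (c i.+4) (c i.+4.+1) (i%:R) => x0 x1 x2 x3 x4 x5 k; fld.
Qed.

Lemma TmL (x y : nat -> R) : Tm (fun i => x i - y i) = fun i => Tm x i - Tm y i.
Proof. apply: functional_extensionality => i; rewrite /Tm; ring. Qed.
Lemma TmZ (u : R) (x : nat -> R) : Tm (fun i => u * x i) = fun i => u * Tm x i.
Proof. apply: functional_extensionality => i; rewrite /Tm; ring. Qed.
Lemma MmZ (u : R) (x : nat -> R) : Mm (fun i => u * x i) = fun i => u * Mm x i.
Proof. apply: functional_extensionality => -[|i]; rewrite /Mm; ring. Qed.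

Lemma Tm_supp N (x : nat -> R) : (forall i, (N <= i)%N -> x i = 0) ->
  forall i, (N <= i)%N -> Tm x i = 0.
Proof.
move=> S i Hi; rewrite /Tm !S; [ring| | |] => //; lia.
Qed.

Lemma tri N (x : nat -> R) l : (forall i, (N <= i)%N -> x i = 0) ->
  (forall i, Tm x i = l * x i) -> (forall j, (j < N)%N -> lN j != l) -> forall i, x i = 0.
Proof.
move=> S E D.
have K : forall t i, (N <= i + t)%N -> x i = 0.
  elim=> [|t IH] i H; first by apply: S; rewrite addn0 in H.
  case: (leqP N i) => Hi; first exact: S.
  have X1 : x i.+1 = 0 by apply: IH; lia.
  have X2 : x i.+2 = 0 by apply: IH; lia.
  have := E i; rewrite /Tm X1 X2 !mulr0 !addr0 => /eqP; rewrite -subr_eq0 -mulrBl mulf_eq0.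
  by rewrite subr_eq0 (negPf (D i Hi)) /= => /eqP.
by move=> i; apply: (K N); exact: leq_addl.
Qed.

Lemma spectral m (c c1 c0 : nat -> R) (be ga : R) :
  (forall i, Tm c i = lN m.+1 * c i) ->
  (forall i, Tm c1 i = lN m.+2 * c1 i) ->
  (forall i, Tm c0 i = lN m * c0 i) ->
  c m.+1 = 1 ->
  (forall i, (m <= i)%N -> Mm c i - c1 i - be * c i - ga * c0 i = 0) ->
  (forall j, (j < m)%N -> lN j != lN m.+2 /\ lN j != lN m) ->
  forall i, Mm c i - c1 i - be * c i - ga * c0 i = 0.
Proof.
move=> Ec Ec1 Ec0 top Sd D.
set d := fun i => Mm c i - c1 i - be * c i - ga * c0 i.
rewrite -/(d _).
set la := lN m.+1; set a := lN m.+2; set b := lN m.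
have ETc : Tm c = fun i => la * c i by apply: functional_extensionality.
have ETc1 : Tm c1 = fun i => a * c1 i by apply: functional_extensionality.
have ETc0 : Tm c0 = fun i => b * c0 i by apply: functional_extensionality.
have Hab : a + b = 2 * la + 2 * a0.
  rewrite /a /b /la /lN /lam !intrn !natS; ring.
have Hab2 : a * b = la ^+ 2 - 2 * a0 * la - (b0 ^+ 2 - 2 * a0 * b0).
  rewrite /a /b /la /lN /lam !intrn !natS; ring.
pose Q (x : nat -> R) i := Tm (Tm x) i - (a + b) * Tm x i + a * b * x i.
pose ka := 2 * la ^+ 2 + (2 * a1 - b0) * la + b1 * (b0 - 2 * a0).
have Qe : forall i, Q (Mm c) i = ka * c i.
  move=> i; have := Wid c i.
  rewrite !(ETc, MmZ, TmZ) /= /Q /ka Hab Hab2 => W.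
  by apply: etrans (etrans _ W) _; ring.
have Qc1 : forall i, Q c1 i = 0 by move=> i; rewrite /Q !(ETc1, TmZ) /=; ring.
have Qc0 : forall i, Q c0 i = 0 by move=> i; rewrite /Q !(ETc0, TmZ) /=; ring.
have Qc : forall i, Q c i = (la ^+ 2 - (a + b) * la + a * b) * c i
  by move=> i; rewrite /Q !(ETc, TmZ) /=; ring.
have Qd : forall i, Q d i = (ka - be * (la ^+ 2 - (a + b) * la + a * b)) * c i.
  move=> i; have -> : d = fun i => ((Mm c i - c1 i) - be * c i) - ga * c0 i by [].
  transitivity (Q (Mm c) i - Q c1 i - be * Q c i - ga * Q c0 i).
    by rewrite /Q !(TmL, TmZ) /=; ring.
  by rewrite Qe Qc1 Qc0 Qc; ring.
have Sd' : forall i, (m <= i)%N -> d i = 0 by [].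
have STd := Tm_supp _ _ Sd'.
have STTd := Tm_supp _ _ STd.
have k0 : ka - be * (la ^+ 2 - (a + b) * la + a * b) = 0.
  have := Qd m.+1; rewrite top mulr1 /Q STTd ?STd ?Sd' ?mulr0 ?subrr ?addr0 //; lia.
have Qd0 : forall i, Q d i = 0 by move=> i; rewrite Qd k0 mul0r.
pose f i := Tm d i - b * d i.
have Sf : forall i, (m <= i)%N -> f i = 0 by move=> i Hi; rewrite /f STd // Sd' // mulr0 subrr.
have Ef : forall i, Tm f i = a * f i.
  move=> i; apply/eqP; rewrite -subr_eq0; apply/eqP.
  have -> : f = fun i => Tm d i - b * d i by [].
  rewrite TmL TmZ; have := Qd0 i; rewrite /Q => <-; ring.
have f0 := tri _ _ _ Sf Ef (fun j Hj => (D j Hj).1).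
have Ed : forall i, Tm d i = b * d i by move=> i; apply/eqP; rewrite -subr_eq0; apply/eqP; exact: f0.
exact: tri _ _ _ Sd' Ed (fun j Hj => (D j Hj).2).
Qed.

Definition cP (P : nat -> {poly R}) n := coords n.+1 (P n).

Lemma cP_props (P : nat -> {poly R}) (hmonic : forall n, P n \is monic)
  (hsize : forall n, size (P n) = n.+1) n :
  P n \Po mu' = comb n.+1 (cP P n) /\ (forall i, (n < i)%N -> cP P n i = 0) /\ cP P n n = 1.
Proof.
have [E S] := coordsP n.+1 (P n) (eq_leq (hsize n)).
split; first by rewrite comb_Th /cP -E.
split; first by move=> i Hi; apply: S.
rewrite /cP /= eqxx; have /monicP := hmonic n; by rewrite lead_coefE hsize.
Qed.

Lemma cP_eig (P : nat -> {poly R}) (hmonic : forall n, P n \is monic)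
  (hsize : forall n, size (P n) = n.+1)
  (hsol : forall n, Lop (P n \Po mu') = lN n *: (P n \Po mu')) n i :
  Tm (cP P n) i = lN n * cP P n i.
Proof.
have [E [S T]] := cP_props P hmonic hsize n.
have H : comb n.+1 (Tm (cP P n)) = comb n.+1 (fun i => lN n * cP P n i).
  rewrite -comb_L ?S // -E hsol E /comb scaler_sumr; apply: eq_bigr => j _; by rewrite scalerA.
case: (ltnP i n.+1) => Hi; first exact: comb_inj _ _ _ H i Hi.
rewrite /Tm !S; [ring | | | ] => //; lia.
Qed.

Lemma lam_ne (P : nat -> {poly R}) (hmonic : forall n, P n \is monic)
  (hsize : forall n, size (P n) = n.+1)
  (hsol : forall n, Lop (P n \Po mu') = lN n *: (P n \Po mu'))
  (huniq : forall n (q : {poly R}), q \is monic -> size q = n.+1 ->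
      Lop (q \Po mu') = lN n *: (q \Po mu') -> q = P n) k n :
  (k < n)%N -> lN k != lN n.
Proof.
move=> kn; apply/eqP => E.
have Hsz : (size (P k) < size (P n))%N by rewrite !hsize.
have M : P n + P k \is monic by rewrite monicE lead_coefDl // -monicE.
have S : size (P n + P k) = n.+1 by rewrite size_addl // hsize.
have O : Lop ((P n + P k) \Po mu') = lN n *: ((P n + P k) \Po mu').
  by rewrite comp_polyD LopD !hsol E scalerDr.
have Hk : P k = 0 by apply: (addrI (P n)); rewrite addr0; exact: huniq M S O.
by have := hsize k; rewrite Hk size_poly0.
Qed.

Lemma p_cP (P : nat -> {poly R}) (hmonic : forall n, P n \is monic)
  (hsize : forall n, size (P n) = n.+1) p (hp : theta_expansion c2 c3 P p) j n :
  p j n = if (j <= n)%N then cP P n (n - j) else 0.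
Proof.
case: ifP => Hj; last by apply: hp.2; rewrite ltnNge Hj.
have [E [S T]] := cP_props P hmonic hsize n.
have H : comb n.+1 (fun i => p (n - i)%N n) = comb n.+1 (cP P n).
  rewrite -E hp.1 (reindex_inj rev_ord_inj) /comb; apply: eq_bigr => i _ /=.
  by rewrite subSS thE subKn // -ltnS.
have Hn : (n - j < n.+1)%N by rewrite ltnS leq_subr.
by rewrite -(comb_inj _ _ _ H _ Hn) subKn.
Qed.

Lemma p_exists (P : nat -> {poly R}) (hmonic : forall n, P n \is monic)
  (hsize : forall n, size (P n) = n.+1) :
  theta_expansion c2 c3 P (fun j n => if (j <= n)%N then cP P n (n - j) else 0).
Proof.
split; last by move=> n j H; rewrite leqNgt H.
move=> n; have [E [S T]] := cP_props P hmonic hsize n.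
rewrite E (reindex_inj rev_ord_inj) /comb; apply: eq_bigr => i _ /=.
have Hi : (i <= n)%N by rewrite -ltnS.
by rewrite subSS leq_subr subKn // thE.
Qed.

Lemma comb_scale a N c : a *: comb N c = comb N (fun i => a * c i).
Proof. rewrite /comb scaler_sumr; apply: eq_bigr => i _; by rewrite scalerA. Qed.
Lemma comb_sub N x y : comb N x - comb N y = comb N (fun i => x i - y i).
Proof. rewrite /comb -sumrB; apply: eq_bigr => i _; by rewrite scalerBl. Qed.
Lemma comb_ext N c : c N = 0 -> comb N.+1 c = comb N c.
Proof. by move=> H; rewrite /comb big_ord_recr /= H scale0r addr0. Qed.
Lemma comb_eq N x y : (forall i, x i = y i) -> comb N x = comb N y.
Proof. by move=> H; apply: eq_bigr => i _; rewrite H. Qed.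

Lemma p2num x m : p2_formula c2 c3 a0 a1 a2 b0 b1 x m.+2 =
  - (lam a0 b0 (m.+2%:Z - 2) - lam a0 b0 m.+2%:Z)^-1 * (AN m.+1 * x + BN m.+2).
Proof.
rewrite /p2_formula; congr (_ * _).
rewrite /AN /BN /fc /gc !intrnB ?intrn !natS; fld.
Qed.

Lemma HD1 m : ((m.+1)%:Z - 1 = m%:Z)%R. Proof. by rewrite -addn1 PoszD addrK. Qed.
Lemma HD2 m : ((m.+2)%:Z - 2 = m%:Z)%R. Proof. by rewrite -addn2 PoszD addrK. Qed.

Lemma rec_fin N (c c1 c0 : nat -> R) be ga (A B C : {poly R}) :
  A = comb N.+1 c1 -> B = comb N c -> C = comb N.+1 c0 -> c N = 0 ->
  (forall i, Mm c i - c1 i - be * c i - ga * c0 i = 0) ->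
  A = (mu' - be%:P) * B - ga *: C.
Proof.
move=> -> -> -> HN K.
rewrite mulrBl comb_mu // mul_polyC -(comb_ext N c) //.
rewrite !comb_scale !comb_sub; apply: comb_eq => i.
by rewrite -[RHS]subr0 -(K i); ring.
Qed.

Lemma main (P : nat -> {poly R})
  (hmonic : forall n, P n \is monic)
  (hsize : forall n, size (P n) = n.+1)
  (hsol : forall n, ode c2 c3 a0 a1 a2 b0 b1 (lam a0 b0 n%:Z) (P n \Po mu c2 c3))
  (huniq : forall n (q : {poly R}), q \is monic -> size q = n.+1 ->
      ode c2 c3 a0 a1 a2 b0 b1 (lam a0 b0 n%:Z) (q \Po mu c2 c3) -> q = P n) :
  (exists p, theta_expansion c2 c3 P p) /\
  forall p : nat -> nat -> R, theta_expansion c2 c3 P p ->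
    let beta n := p 1%N n - p 1%N n.+1 + fc c2 c3 n%:Z in
    let gamma n := p 1%N n * (fc c2 c3 (n%:Z - 1) - beta n) + p 2%N n - p 2%N n.+1 in
    (forall n, p 1%N n = p1_formula c2 c3 a0 a1 b0 b1 n) /\
    (forall n, p 2%N n = p2_formula c2 c3 a0 a1 a2 b0 b1 (p 1%N n) n) /\
    (forall n, P n.+1 \Po mu c2 c3 =
       (mu c2 c3 - (beta n)%:P) * (P n \Po mu c2 c3)
       - gamma n *: (if n is m.+1 then P m \Po mu c2 c3 else 0)).
Proof.
have hsol' : forall n, Lop (P n \Po mu') = lN n *: (P n \Po mu') := hsol.
have huniq' : forall n q, q \is monic -> size q = n.+1 ->
   Lop (q \Po mu') = lN n *: (q \Po mu') -> q = P n := huniq.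
have LNE := lam_ne P hmonic hsize hsol' huniq'.
have EIG := cP_eig P hmonic hsize hsol'.
have PR := cP_props P hmonic hsize.
split; first by eexists; exact: p_exists P hmonic hsize.
move=> p hp beta gamma.
have PC := p_cP P hmonic hsize p hp.
have p10 : p 1%N 0%N = 0 by rewrite PC.
have p20 : p 2%N 0%N = 0 by rewrite PC.
have p21 : p 2%N 1%N = 0 by rewrite PC.
have p1S : forall m, p 1%N m.+1 = cP P m.+1 m by move=> m; rewrite PC /= subn1.
have p2S : forall m, p 2%N m.+2 = cP P m.+2 m by move=> m; rewrite PC /= subSS subn1.
have P1 : forall n, p 1%N n = p1_formula c2 c3 a0 a1 b0 b1 n.
  case=> [|m]; first by rewrite p10 /p1_formula; ring.
  rewrite p1S.
  have [_ [S T]] := PR m.+1.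
  have E := EIG m.+1 m; rewrite /Tm T (S m.+2) // mulr0 addr0 mulr1 in E.
  set c := cP P m.+1 in E *.
  rewrite /p1_formula -/(AN m.+1) HD1 -/(lN m) -/(lN m.+1).
  have N : lN m - lN m.+1 != 0 by rewrite subr_eq0 LNE.
  have -> : AN m.+1 = c m * (lN m.+1 - lN m) by apply: (addrI (lN m * c m)); rewrite E; ring.
  by field.
split; first exact: P1.
split.
  case=> [|[|m]].
  - by rewrite p20 p10 /p2_formula; ring.
  - by rewrite p21 /p2_formula /gc !intrnB ?intrn; ring.
  rewrite p2S p1S p2num HD2 -/(lN m) -/(lN m.+2).
  have [_ [S T]] := PR m.+2.
  have E := EIG m.+2 m; rewrite /Tm T mulr1 in E.
  set c := cP P m.+2 in E *.
  have N : lN m - lN m.+2 != 0 by rewrite subr_eq0 LNE.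
  have -> : AN m.+1 * c m.+1 + BN m.+2 = c m * (lN m.+2 - lN m).
    by apply: (addrI (lN m * c m)); rewrite addrA E; ring.
  by field.
move=> n; rewrite -/mu'.
case: n => [|m].
- have [E0 [S0 T0]] := PR 0%N; have [E1 [S1 T1]] := PR 1%N.
  apply: (rec_fin 1 (cP P 0) (cP P 1) (fun _ => 0)) => //.
  + by rewrite /comb big1 // => i _; rewrite scale0r.
  move=> i; rewrite /beta p10 p1S.
  case: i => [|[|i]]; rewrite /Mm.
  * by rewrite T0 /fN; ring.
  * by rewrite T0 T1 (S0 1%N) //; ring.
  * by rewrite !S0 // S1 //; ring.
have [E0 [S0 T0]] := PR m; have [E1 [S1 T1]] := PR m.+1; have [E2 [S2 T2]] := PR m.+2.
apply: (rec_fin m.+2 (cP P m.+1) (cP P m.+2) (cP P m)) => //.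
- by rewrite E0 (comb_ext m.+2) ?(comb_ext m.+1) // S0.
- by apply: S1.
have p2m : p 2%N m.+1 = (if m is j.+1 then cP P m.+1 j else 0).
  by case: (m) => [|j]; [exact: p21 | exact: p2S].
apply: (spectral m).
- exact: EIG.
- exact: EIG.
- exact: EIG.
- exact: T1.
- move=> i Hi; have [k ->] : exists k, i = (m + k)%N by exists (i - m)%N; rewrite subnKC.
  rewrite /gamma /beta p2m !p1S p2S HD1 -/(fN m) -/(fN m.+1).
  case: k => [|[|[|k]]]; rewrite ?addn0 ?addn1 ?addn2 /Mm.
  + rewrite T0; case: (m) => [|j] /=; ring.
  + rewrite T1 (S0 m.+1) //; ring.
  + rewrite T1 T2 (S1 m.+2) // (S0 m.+2) //; ring.
  + rewrite addnS (S1 (m + k.+2)) ?(S1 (m + k.+2).+1) ?(S2 (m + k.+2).+1) ?(S0 (m + k.+2).+1) ?mulr0; try lia. case: (m) => [|j] /=; ring.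
- move=> j Hj; split; apply: LNE; lia.
Qed.


End Work.

Theorem theorem4p5 (R : numFieldType) (c2 c3 a0 a1 a2 b0 b1 : R)
  (P : nat -> {poly R})
  (hmonic : forall n, P n \is monic)
  (hsize : forall n, size (P n) = n.+1)
  (hsol : forall n, ode c2 c3 a0 a1 a2 b0 b1 (lam a0 b0 n%:Z) (P n \Po mu c2 c3))
  (huniq : forall n (q : {poly R}), q \is monic -> size q = n.+1 ->
      ode c2 c3 a0 a1 a2 b0 b1 (lam a0 b0 n%:Z) (q \Po mu c2 c3) -> q = P n) :
  (exists p, theta_expansion c2 c3 P p) /\
  forall p : nat -> nat -> R, theta_expansion c2 c3 P p ->
    let beta n := p 1%N n - p 1%N n.+1 + fc c2 c3 n%:Z in
    let gamma n := p 1%N n * (fc c2 c3 (n%:Z - 1) - beta n) + p 2%N n - p 2%N n.+1 in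
    (forall n, p 1%N n = p1_formula c2 c3 a0 a1 b0 b1 n) /\
    (forall n, p 2%N n = p2_formula c2 c3 a0 a1 a2 b0 b1 (p 1%N n) n) /\
    (forall n, P n.+1 \Po mu c2 c3 =
       (mu c2 c3 - (beta n)%:P) * (P n \Po mu c2 c3)
       - gamma n *: (if n is m.+1 then P m \Po mu c2 c3 else 0)).
Proof.
exact: (@main R c2 c3 a0 a1 a2 b0 b1 P hmonic hsize hsol huniq).
Qed.
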